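(* Let $g:\mathbb{R}^n\to\mathbb{R}^n$ be convex, order-preserving and additively homogeneous, and assume $g$ admits at least one harmonic vector. Let $C$ be the set of critical nodes of $g$ and $N=[n]\setminus C$. Let $u\in\mathbb{R}^n$ be super-harmonic for $g$ ($g(u)\le u$). Then each of the following conditions defines uniquely a vector $v\in\mathbb{R}^n$, and all four define the same vector: (i) $v=\lim_{k\to\infty} g^k(u)$ (the limit exists); (ii) $v$ is harmonic for $g$ and $v_C=u_C$; (iii) $v_C=u_C$ and $v_N$ is a fixed point of the map $h:\mathbb{R}^N\to\mathbb{R}^N$, $h(y)=\big(g(\imath_N(y,u_C))\big)_N$; (iv) $v$ is the smallest super-harmonic vector of $g$ that dominates $u$ on $C$ (i.e. with $v_C\ge u_C$).
   Context: $[n]=\{1,\dots,n\}$, $g^k$ is the $k$-th iterate of $g$. A map $g:\mathbb{R}^n\to\mathbb{R}^n$ is order-preserving if $x\le y$ (coordinatewise) implies $g(x)\le g(y)$; additively homogeneous if $g(\lambda+x)=\lambda+g(x)$ for all $\lambda\in\mathbb{R}$, $x\in\mathbb{R}^n$; convex if each coordinate $g_i$ is convex. A vector $u$ is harmonic for $g$ if $g(u)=u$ and super-harmonic if $g(u)\le u$. The subdifferential of $g$ at $u$ is $\partial g(u)=\{M\in\mathbb{R}^{n\times n}: g(x)-g(u)\ge M(x-u)\ \forall x\}$ (its elements are stochastic matrices here). For $I\subseteq[n]$, $x_I$ denotes the restriction of $x$ to $I$, $M_{IJ}$ the $I\times J$ submatrix, and $\imath_N(y,z)$ the vector of $\mathbb{R}^n$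 with $N$-coordinates $y$ and $C$-coordinates $z$. A recurrence class of $M$ is a final communication class $F$ of $M$ (strongly connected class of the graph of nonzero entries with no arc leaving it) with $M_{FF}$ stochastic. A node is critical for $g$ if it belongs to a recurrence class of some $M\in\partial g(w)$, where $w$ is a harmonic vector of $g$; this set does not depend on the choice of $w$. *)

(* Defs.v *)
From HB Require Import structures.
From mathcomp Require Import all_boot all_order all_algebra.
From mathcomp Require Import all_classical all_reals all_analysis.
Set Implicit Arguments. Unset Strict Implicit. Unset Printing Implicit Defensive.
Import Order.TTheory GRing.Theory Num.Theory.
Local Open Scope ring_scope.

Section Defs.
Variables (R : realType) (n : nat).
Notation vec := ('I_n -> R).

Definition vle (x y : vec) : Prop := forall i, x i <= y i.

Definition order_preserving (g : vec -> vec) : Prop :=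
  forall x y, vle x y -> vle (g x) (g y).

Definition add_homogeneous (g : vec -> vec) : Prop :=
  forall (lam : R) (x : vec), g (fun i => lam + x i) = (fun i => lam + g x i).

Definition convex_map (g : vec -> vec) : Prop :=
  forall (t : R) (x y : vec) (i : 'I_n), 0 <= t -> t <= 1 ->
    g (fun j => t * x j + (1 - t) * y j) i <= t * g x i + (1 - t) * g y i.

Definition is_harmonic (g : vec -> vec) (u : vec) : Prop := g u = u.
Definition is_superharmonic (g : vec -> vec) (u : vec) : Prop := vle (g u) u.

Definition subdiff (g : vec -> vec) (u : vec) (M : 'M[R]_n) : Prop :=
  forall (x : vec) (i : 'I_n), \sum_j M i j * (x j - u j) <= g x i - g u i.

Definition mx_graph (M : 'M[R]_n) : rel 'I_n := fun i j => M i j != 0.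

Definition comm_class (M : 'M[R]_n) (F : {set 'I_n}) : Prop :=
  exists i, F = [set j | connect (mx_graph M) i j && connect (mx_graph M) j i].

Definition final_set (M : 'M[R]_n) (F : {set 'I_n}) : Prop :=
  forall i j, i \in F -> mx_graph M i j -> j \in F.

Definition stochastic_on (M : 'M[R]_n) (F : {set 'I_n}) : Prop :=
  (forall i j, i \in F -> j \in F -> 0 <= M i j) /\
  (forall i, i \in F -> \sum_(j in F) M i j = 1).

Definition recurrence_class (M : 'M[R]_n) (F : {set 'I_n}) : Prop :=
  [/\ comm_class M F, final_set M F & stochastic_on M F].

Definition critical_wrt (g : vec -> vec) (w : vec) (i : 'I_n) : Prop :=
  exists (M : 'M[R]_n) (F : {set 'I_n}),
    [/\ subdiff g w M, recurrence_class M F & i \in F].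

(* \imath_N(y, z): N-coordinates from y, C-coordinates from z *)
Definition imath (C : 'I_n -> Prop) (y z : vec) : vec :=
  fun i => if `[< C i >] then z i else y i.

End Defs.
Arguments vle {R n}.
Arguments order_preserving {R n}.
Arguments add_homogeneous {R n}.
Arguments convex_map {R n}.
Arguments is_harmonic {R n}.
Arguments is_superharmonic {R n}.
Arguments subdiff {R n}.
Arguments mx_graph {R n}.
Arguments comm_class {R n}.
Arguments final_set {R n}.
Arguments stochastic_on {R n}.
Arguments recurrence_class {R n}.
Arguments critical_wrt {R n}.
Arguments imath {R n}.

(* Main.v *)
Require Import Defs.
From HB Require Import structures.
From mathcomp Require Import all_boot all_order all_algebra.
From mathcomp Require Import all_classical all_reals all_analysis.
From mathcomp Require Import ring lra.
Import Order.TTheory GRing.Theory Num.Theory numFieldNormedType.Exports.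
Local Open Scope ring_scope.

Section SG.
Local Open Scope classical_set_scope.
Variables (R : realType) (n : nat).
Notation vec := ('I_n -> R).
Variable f : vec -> R.
Hypothesis fconv : forall t (x y : vec), 0 <= t -> t <= 1 ->
  f (fun j => t * x j + (1 - t) * y j) <= t * f x + (1 - t) * f y.
Variable a : vec.

Definition supp_lt k (x : vec) := forall j : 'I_n, (k <= j)%N -> x j = 0.
Definition Pk k := exists m : vec, forall x, supp_lt k x ->
  \sum_j m j * x j <= f (fun j => a j + x j) - f a.

Lemma P0 : Pk 0.
Proof.
exists (fun _ => 0) => x hx.
have -> : (fun j => a j + x j) = a by apply/funext => j; rewrite hx // addr0.
by rewrite subrr big1 // => j _; rewrite mul0r.
Qed.

Lemma div_aux (s t A B : R) : 0 < s -> 0 < t -> 0 <= t * A + s * B -> - B / t <= A / s.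
Proof.
move=> s0 t0 h; rewrite -subr_ge0.
have -> : A / s - - B / t = (t * A + s * B) / (s * t).
  by field; apply/andP; split; rewrite gt_eqF.
by apply: divr_ge0 => //; rewrite mulr_ge0 // ltW.
Qed.

Lemma Pstep k (hk : (k < n)%N) : Pk k -> Pk k.+1.
Proof.
move=> [m hm].
pose e : 'I_n := Ordinal hk.
pose pt (x : vec) (s : R) := fun j : 'I_n => a j + x j + s * (j == e)%:R.
pose phi x s := f (pt x s) - f a - \sum_j m j * x j.
have key : forall x y s t, supp_lt k x -> supp_lt k y -> 0 < s -> 0 < t ->
    0 <= t * phi x s + s * phi y (- t).
  move=> x y s t hx hy s0 t0.
  pose l := t / (s + t).
  have st0 : 0 < s + t by rewrite addr_gt0.
  have l0 : 0 <= l by rewrite divr_ge0 // ltW.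
  have l1 : l <= 1 by rewrite ler_pdivrMr // mul1r lerDr ltW.
  pose z := fun j => l * x j + (1 - l) * y j.
  have hz : supp_lt k z by move=> j hj; rewrite /z hx // hy // !mulr0 addr0.
  have hc := fconv l (pt x s) (pt y (- t)) l0 l1.
  have eqp : (fun j => l * pt x s j + (1 - l) * pt y (- t) j) = (fun j => a j + z j).
    apply/funext => j; rewrite /pt /z /l.
    field; by rewrite gt_eqF.
  rewrite eqp in hc.
  have hmz := hm z hz.
  have sz : \sum_j m j * z j = l * \sum_j m j * x j + (1 - l) * \sum_j m j * y j.
    rewrite !mulr_sumr -big_split /=; apply: eq_bigr => j _; rewrite /z; ring.
  rewrite sz in hmz.
  rewrite /phi.
  move: hc hmz; set A := f (pt x s); set B := f (pt y (- t)); set fa := f a.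
  set X := \sum_j m j * x j; set Y := \sum_j m j * y j; set FZ := f _.
  move=> hc hmz.
  have -> : t * (A - fa - X) + s * (B - fa - Y) =
      (s + t) * (l * A + (1 - l) * B - fa - (l * X + (1 - l) * Y)).
    rewrite /l; field; by rewrite gt_eqF.
  apply: mulr_ge0; first exact: ltW.
  lra.
pose L := [set zz | exists x t, [/\ supp_lt k x, 0 < t & zz = - phi x (- t) / t]].
have x0 : supp_lt k (fun _ => 0) by [].
have Lne : L !=set0 by exists (- phi (fun _ => 0) (- 1) / 1); exists (fun _ => 0), 1.
have Lub : forall x s, supp_lt k x -> 0 < s -> ubound L (phi x s / s).
  move=> x s hx s0 zz [y [t [hy t0 ->]]]; exact: div_aux (key _ _ _ _ hx hy s0 t0).
pose c := sup L.
have cle : forall x s, supp_lt k x -> 0 < s -> c <= phi x s / s.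
  by move=> x s hx s0; apply: ge_sup => //; exact: Lub.
have gec : forall x t, supp_lt k x -> 0 < t -> - phi x (- t) / t <= c.
  move=> x t hx t0; apply: sup_upper_bound; last by exists x, t.
  split => //; exists (phi (fun _ => 0) 1 / 1); exact: Lub.
exists (fun j => if j == e then c else m j) => x hx.
pose x' := fun j => if j == e then 0 else x j.
have hx' : supp_lt k x'.
  move=> j hj; rewrite /x'; case: eqP => // /eqP je; apply: hx.
  rewrite ltn_neqAle hj andbT; apply/eqP => kj; move: je; apply/negP; rewrite negbK.
  by apply/eqP/val_inj; rewrite /= kj.
set s := x e.
have ptx : (fun j => a j + x j) = pt x' s.
  apply/funext => j; rewrite /pt /x' /s; case: eqP => [->|_]; first by rewrite mulr1 addr0.
  by rewrite mulr0 addr0.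
have sumx : \sum_j (if j == e then c else m j) * x j = \sum_j m j * x' j + c * s.
  rewrite [LHS](bigD1 e) //= [in RHS](bigD1 e) //= /x' !eqxx mulr0 add0r addrC /s; congr (_ + _).
  by apply: eq_bigr => j /negbTE ->.
rewrite sumx ptx.
suff : c * s <= phi x' s by rewrite /phi; lra.
case: (ltrgtP s 0) => hs.
- have t0 : 0 < - s by rewrite oppr_gt0.
  have := gec _ _ hx' t0; rewrite opprK ler_pdivrMr //; lra.
- have := cle _ _ hx' hs; rewrite ler_pdivlMr //.
- rewrite hs mulr0 /phi.
  have -> : pt x' 0 = (fun j => a j + x' j) by apply/funext => j; rewrite /pt mul0r addr0.
  have := hm _ hx'; lra.
Qed.

Lemma subgrad_exists : exists m : vec, forall x, \sum_j m j * (x j - a j) <= f x - f a.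
Proof.
have : forall k, (k <= n)%N -> Pk k.
  elim => [_|k ih hk]; first exact: P0.
  by apply: Pstep => //; apply: ih; exact: ltnW.
move=> /(_ n (leqnn n)) [m hm]; exists m => x.
have hs : supp_lt n (fun j => x j - a j) by move=> j hj; have := ltn_ord j; rewrite ltnNge hj.
have := hm _ hs.
have -> : (fun j => a j + (x j - a j)) = x by apply/funext => j; rewrite addrC subrK.
done.
Qed.
End SG.

Section Graph.
Variable n : nat.
Implicit Types e : rel 'I_n.

Lemma my_closed_connect e (S : {set 'I_n}) x y :
  (forall a b, a \in S -> e a b -> b \in S) -> x \in S -> connect e x y -> y \in S.
Proof.
move=> hS xS /connectP [p pth ->]; elim: p x xS pth => [|z p ih] x xS //=.
by move=> /andP [exz pth]; apply: ih pth; exact: hS exz.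
Qed.

Lemma my_connect_sub e1 e2 (F : {set 'I_n}) x y :
  (forall a b, a \in F -> e1 a b -> b \in F) ->
  (forall a b, a \in F -> e1 a b -> e2 a b) ->
  x \in F -> connect e1 x y -> connect e2 x y.
Proof.
move=> hF h12 xF /connectP [p pth ->]; elim: p x xF pth => [|z p ih] x xF /=.
  by rewrite connect0.
move=> /andP [exz pth]; apply: (connect_trans (y := z)).
  by apply: connect1; exact: h12 exz.
by apply: ih pth; exact: hF exz.
Qed.

Lemma my_final_reach e (S : {set 'I_n}) i0 :
  i0 \in S -> (forall a b, a \in S -> e a b -> b \in S) ->
  exists j, [/\ j \in S, forall k, connect e j k -> connect e k j & forall k, connect e j k -> k \in S].
Proof.
move=> i0S hS.
pose reach (j : 'I_n) : {set 'I_n} := [set k | connect e j k].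
have [j hij hmin] := @arg_minnP _ i0 (fun j => connect e i0 j) (fun j => #|reach j|) (connect0 e i0).
have jS : j \in S by exact: my_closed_connect hij.
exists j; split => //; last by move=> k hk; exact: my_closed_connect hk.
move=> k hjk.
have sub : reach k \subset reach j.
  by apply/fintype.subsetP => l; rewrite !inE => hkl; exact: connect_trans hkl.
have ik : connect e i0 k by exact: connect_trans hjk.
have /eqP eqr : reach k == reach j by rewrite eqEcard sub hmin.
have : j \in reach k by rewrite eqr inE connect0.
by rewrite inE.
Qed.
End Graph.

Section Stoch.
Variables (R : realType) (n : nat).
Notation vec := ('I_n -> R).

Lemma sum_final (M : 'M[R]_n) (F : {set 'I_n}) k (y : vec) :
  final_set M F -> k \in F -> \sum_l M k l * y l = \sum_(l in F) M k l * y l.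
Proof.
move=> hfin kF; rewrite [RHS]big_mkcond /=; apply: eq_bigr => l _.
case: ifP => // lF; have : M k l == 0.
  by apply: contraFT lF => nz; apply: hfin kF _.
by move/eqP ->; rewrite mul0r.
Qed.

Lemma rec_in_closed (M : 'M[R]_n) (hnn : forall i j, 0 <= M i j)
  (hs : forall i, \sum_j M i j = 1) (S : {set 'I_n}) i0 :
  i0 \in S -> (forall a b, a \in S -> mx_graph M a b -> b \in S) ->
  exists F i, [/\ recurrence_class M F, i \in F & forall j, j \in F -> j \in S].
Proof.
move=> i0S hS.
have [j [jS back fwd]] := @my_final_reach n _ S i0 i0S hS.
pose F := [set k | connect (mx_graph M) j k && connect (mx_graph M) k j].
have jF : j \in F by rewrite inE connect0.
have fin : final_set M F.
  move=> a b; rewrite !inE => /andP [ja aj] ab.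
  have jb : connect (mx_graph M) j b by apply: connect_trans ja (connect1 ab).
  by rewrite jb back.
exists F, j; split => //; last by move=> k; rewrite inE => /andP [/fwd].
split; first by exists j.
  exact: fin.
split; first by move=> *; exact: hnn.
move=> i iF; rewrite -(hs i); under [RHS]eq_bigr do rewrite -[M i _]mulr1.
by rewrite (sum_final _ _ _ _ fin iF); apply: eq_bigr => l _; rewrite mulr1.
Qed.

Lemma EP (M : 'M[R]_n) (hnn : forall i j, 0 <= M i j) F (d : vec) :
  recurrence_class M F -> (forall i, i \in F -> \sum_j M i j * d j <= d i) ->
  exists c, forall k, k \in F -> d k = c.
Proof.
move=> [[j0 ->] fin [_ st]] hsup.
set F0 := [set j | _] in fin st hsup *.
have j0F : j0 \in F0 by rewrite inE connect0.
have [i1 i1F hmin] := @arg_minP _ R _ j0 (mem F0) d j0F.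
have {}i1F : i1 \in F0 := i1F.
exists (d i1).
pose S := [set k | (k \in F0) && (d k == d i1)].
have clS : forall a b, a \in S -> mx_graph M a b -> b \in S.
  move=> a b; rewrite inE => /andP [aF /eqP da] ab.
  have bF : b \in F0 by exact: fin ab.
  rewrite inE bF /=.
  have h := hsup a aF; rewrite (sum_final _ _ _ _ fin aF) in h.
  have hz : \sum_(l in F0) M a l * (d l - d a) = 0.
    apply/eqP; rewrite eq_le; apply/andP; split.
      under eq_bigr do rewrite mulrBr.
      by rewrite sumrB -mulr_suml st // mul1r subr_le0.
    by apply: sumr_ge0 => l lF; rewrite mulr_ge0 // subr_ge0 da hmin.
  have hnn' : forall l, l \in F0 -> 0 <= M a l * (d l - d a).
    by move=> l lF; rewrite mulr_ge0 // subr_ge0 da hmin.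
  have /eqP := psumr_eq0P hnn' hz bF.
  rewrite mulf_eq0 (negbTE ab) /= subr_eq0 => /eqP ->; exact/eqP.
have i1S : i1 \in S by rewrite inE i1F eqxx.
move=> k kF.
have : k \in S.
  apply: my_closed_connect clS i1S _.
  move: i1F kF; rewrite !inE => /andP [_ i1j] /andP [jk _]; exact: connect_trans jk.
by rewrite inE => /andP [_ /eqP].
Qed.
End Stoch.
Arguments my_closed_connect {n e S x y}.
Arguments my_connect_sub {n e1 e2 F x y}.
Arguments my_final_reach {n e S i0}.
Arguments sum_final {R n M F k y}.
Arguments EP {R n M} hnn {F d}.
Arguments rec_in_closed {R n M} hnn hs {S i0}.

Section G.
Variables (R : realType) (n : nat) (g : ('I_n -> R) -> ('I_n -> R)).
Hypotheses (gconv : convex_map g) (gmono : order_preserving g) (ghom : add_homogeneous g).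
Variables (w : 'I_n -> R) (hw : is_harmonic g w).
Notation vec := ('I_n -> R).
Notation C := (critical_wrt g w).

Lemma sd_exists a : exists M, subdiff g a M.
Proof.
have /choice [F hF] : forall i, exists m : vec, forall x,
    \sum_j m j * (x j - a j) <= g x i - g a i.
  move=> i; apply: (@subgrad_exists R n (fun x => g x i)) => t x y t0 t1.
  exact: gconv.
exists (\matrix_(i, j) F i j) => x i.
under eq_bigr do rewrite mxE.
exact: hF.
Qed.

Lemma sd_nonneg {a M} : subdiff g a M -> forall i j, 0 <= M i j.
Proof.
move=> hM i j.
pose x := fun k => a k - (k == j)%:R.
have hx : vle x a by move=> k; rewrite /x lerBlDr lerDl ler0n.
have := hM x i.
have -> : \sum_k M i k * (x k - a k) = - M i j.
  rewrite (bigD1 j) //= big1 ?addr0 => [|k /negbTE kj]; last by rewrite /x kj subr0 subrr mulr0.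
  by rewrite /x eqxx addrAC subrr sub0r mulrN1.
have := gmono _ _ hx i; lra.
Qed.

Lemma sd_sum1 {a M} : subdiff g a M -> forall i, \sum_j M i j = 1.
Proof.
move=> hM i.
have h : forall lam, \sum_j M i j * lam <= lam.
  move=> lam; have := hM (fun k => lam + a k) i.
  rewrite ghom; under eq_bigr do rewrite addrK.
  by rewrite addrK.
have h1 := h 1; have h2 := h (-1).
rewrite -mulr_suml mulr1 in h1; rewrite -mulr_suml mulrN1 in h2.
lra.
Qed.

Lemma sum_F_const {M : 'M[R]_n} {F k c} :
  stochastic_on M F -> k \in F -> \sum_(l in F) M k l * c = c.
Proof. by move=> [_ st] kF; rewrite -mulr_suml st // mul1r. Qed.

Lemma super_C u : is_superharmonic g u -> forall i, C i -> g u i = u i.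
Proof.
move=> hu i [M [F [hM hrec iF]]].
have hnn := sd_nonneg hM.
pose d := fun j => u j - w j.
have hd : forall k, \sum_j M k j * d j <= g u k - w k.
  by move=> k; have := hM u k; rewrite hw.
have [c hc] := EP hnn (d := d) hrec (fun k _ => le_trans (hd k) (lerB (hu k) (lexx _))).
have [_ fin st] := hrec.
have := hd i; rewrite (sum_final fin iF).
under eq_bigr => l lF do rewrite hc //.
rewrite (sum_F_const st iF) -(hc _ iF) /d => h.
apply/le_anti; rewrite hu /=; lra.
Qed.

Lemma transfer {v : vec} {M : 'M[R]_n} {F : {set 'I_n}} {i : 'I_n} : (forall k, k \in F -> g v k = v k) -> subdiff g v M ->
  recurrence_class M F -> i \in F -> C i.
Proof.
move=> hv hM hrec iF.
have hnn := sd_nonneg hM.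
have [M0 hM0] := sd_exists w.
pose e := fun j => v j - w j.
have he : forall k, k \in F -> e k <= \sum_j M k j * e j.
  move=> k kF; have := hM w k; rewrite hw hv //.
  have -> : \sum_j M k j * (w j - v j) = - \sum_j M k j * e j.
    by rewrite -sumrN; apply: eq_bigr => j _; rewrite /e; ring.
  rewrite /e; lra.
have he' : forall k, k \in F -> \sum_j M k j * - e j <= - e k.
  move=> k kF; rewrite -(opprK (\sum_j M k j * - e j)) -sumrN.
  under eq_bigr do rewrite mulrN opprK.
  rewrite lerN2; exact: he.
have [c hc] := EP hnn (d := fun j => - e j) hrec he'.
have [[j0 hF] fin st] := hrec.
have heF : forall k, k \in F -> \sum_j M k j * e j = e k.
  move=> k kF; rewrite (sum_final fin kF).
  have ek : forall l, l \in F -> e l = - c by move=> l lF; rewrite -(hc _ lF) opprK.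
  under eq_bigr => l lF do rewrite ek //.
  by rewrite (sum_F_const st kF) ek.
pose M' := \matrix_(k, j) if k \in F then M k j else M0 k j.
have M'E : forall k j, M' k j = if k \in F then M k j else M0 k j by move=> k j; rewrite mxE.
have edge : forall a b, a \in F -> mx_graph M a b = mx_graph M' a b.
  by move=> a b aF; rewrite /mx_graph M'E aF.
exists M', F; split => //.
- move=> x k; under eq_bigr do rewrite M'E; case kF: (k \in F); last exact: hM0.
  have := hM x k; rewrite hv // hw.
  have -> : \sum_j M k j * (x j - w j) = \sum_j M k j * (x j - v j) + \sum_j M k j * e j.
    by rewrite -big_split; apply: eq_bigr => j _; rewrite /e /=; ring.
  rewrite heF // /e; lra.
- have finF : forall a b, a \in F -> mx_graph M a b -> b \in F by exact: fin.
  have finF' : forall a b, a \in F -> mx_graph M' a b -> b \in F.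
    by move=> a b aF; rewrite -edge //; exact: finF.
  have ceq : forall a b, a \in F -> connect (mx_graph M) a b = connect (mx_graph M') a b.
    move=> a b aF; apply/idP/idP.
      apply: (my_connect_sub finF _ aF) => x y xF; by rewrite edge.
    apply: (my_connect_sub finF' _ aF) => x y xF; by rewrite edge.
  have j0F : j0 \in F by rewrite hF inE connect0.
  split.
  + exists j0; rewrite hF; apply/setP => b; rewrite !inE.
    case hb: (connect (mx_graph M) j0 b).
      have bF : b \in F by exact: my_closed_connect finF j0F hb.
      by rewrite -ceq // -ceq // hb.
    by rewrite -ceq // hb.
  + exact: finF'.
  + case: st => st1 st2; split.
      by move=> a b aF bF; rewrite M'E aF; exact: st1.
    by move=> a aF; under eq_bigr do rewrite M'E aF; exact: st2.
Qed.

Lemma MP v M (d : vec) : (forall k, ~ C k -> g v k = v k) -> subdiff g v M ->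
  (forall i, C i -> d i <= 0) -> (forall i, ~ C i -> d i <= \sum_j M i j * d j) ->
  forall i, d i <= 0.
Proof.
move=> hv hM hC hN i; rewrite leNgt; apply/negP => di.
have hnn := sd_nonneg hM; have hs := sd_sum1 hM.
have [i1 _ hmax] := @arg_maxP _ R _ i predT d isT.
set delta := d i1 in hmax.
have dpos : 0 < delta by apply: lt_le_trans di (hmax _ isT).
pose S := [set k | d k == delta].
have i1S : i1 \in S by rewrite inE.
have SnC : forall a, a \in S -> ~ C a.
  by move=> a; rewrite inE => /eqP da /hC; rewrite da leNgt dpos.
have clS : forall a b, a \in S -> mx_graph M a b -> b \in S.
  move=> a b; rewrite inE => /eqP da ab.
  have nCa : ~ C a by move=> /hC; rewrite da leNgt dpos.
  have h := hN a nCa.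
  have hnn' : forall l, true -> 0 <= M a l * (delta - d l).
    by move=> l _; rewrite mulr_ge0 // subr_ge0; exact: hmax.
  have hz : \sum_l M a l * (delta - d l) = 0.
    apply/eqP; rewrite eq_le; apply/andP; split; last by apply: sumr_ge0.
    under eq_bigr do rewrite mulrBr.
    by rewrite sumrB -mulr_suml hs mul1r subr_le0 -da.
  have /eqP := @psumr_eq0P _ _ _ _ hnn' hz b isT.
  by rewrite mulf_eq0 (negbTE ab) /= subr_eq0 inE eq_sym.
have [F [j [hrec jF jS]]] := rec_in_closed hnn hs i1S clS.
have := hC j (transfer (fun k kF => hv k (SnC k (jS k kF))) hM hrec jF).
have := jS _ jF; rewrite inE => /eqP ->; rewrite leNgt dpos.
done.
Qed.

Lemma iter_mono k x y : vle x y -> vle (iter k g x) (iter k g y).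
Proof. by elim: k => //= k ih hxy; apply: gmono; exact: ih. Qed.

Lemma SC v y : is_harmonic g v -> is_superharmonic g y ->
  (forall i, C i -> v i <= y i) -> vle v y.
Proof.
move=> hv hy hC i.
have hv' : forall k, ~ C k -> g v k = v k by move=> k _; rewrite hv.
have [M hM] := sd_exists v.
suff : v i - y i <= 0 by lra.
apply: (@MP v M (fun j => v j - y j) hv' hM).
  by move=> j /hC; lra.
move=> j _; have := hM y j; rewrite hv.
have -> : \sum_k M j k * (y k - v k) = - \sum_k M j k * (v k - y k).
  by rewrite -sumrN; apply: eq_bigr => k _; ring.
have := hy j; lra.
Qed.

Lemma HC v x : is_harmonic g v -> (forall i, C i -> x i = v i) ->
  (forall i, ~ C i -> g x i = x i) -> vle x v.
Proof.
move=> hv hC hN i.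
have [M hM] := sd_exists x.
suff : x i - v i <= 0 by lra.
apply: (@MP x M (fun j => x j - v j) hN hM).
  by move=> j /hC ->; rewrite subrr.
move=> j nC; have := hM v j; rewrite hv hN //.
have -> : \sum_k M j k * (v k - x k) = - \sum_k M j k * (x k - v k).
  by rewrite -sumrN; apply: eq_bigr => k _; ring.
lra.
Qed.

Variables (u : vec) (hu : is_superharmonic g u).
Notation a k := (iter k g u).

Lemma a_dec k : vle (a k.+1) (a k).
Proof.
elim: k => [|k ih]; first exact: hu.
by move=> i; apply: gmono; exact: ih.
Qed.

Lemma a_decr k m : (k <= m)%N -> vle (a m) (a k).
Proof.
move=> /subnKC <-; elim: (m - k)%N => [|p ih] i; first by rewrite addn0.
by rewrite addnS; apply: le_trans (ih i); exact: a_dec.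
Qed.

Definition lbcst : R := \sum_j `|w j - u j|.
Lemma a_lb k i : - lbcst + w i <= a k i.
Proof.
have hl : vle (fun j => - lbcst + w j) u.
  move=> j; have : w j - u j <= lbcst.
    rewrite /lbcst (bigD1 j) //=; apply: le_trans (ler_norm _) _.
    by rewrite lerDl sumr_ge0.
  lra.
have := iter_mono k _ _ hl i.
suff -> : iter k g (fun j => - lbcst + w j) = (fun j => - lbcst + w j) by [].
elim: k => //= k ->; by rewrite ghom hw.
Qed.

Definition v : vec := fun i => inf (range (fun k => a k i)).

Lemma has_inf_a i : has_inf (range (fun k => a k i)).
Proof.
split; first by exists (a 0 i), 0%N.
by exists (- lbcst + w i) => _ [k _ <-]; exact: a_lb.
Qed.

Lemma v_le k i : v i <= a k i.
Proof. by apply: ge_inf; [exact: (has_inf_a i).2 | exists k]. Qed.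

Local Open Scope classical_set_scope.
Local Open Scope ring_scope.
Lemma a_cvg i : (fun k : nat => iter k g u i) @ \oo --> v i.
Proof.
apply: nonincreasing_cvgn; last exact: (has_inf_a i).2.
by move=> k m /a_decr; apply.
Qed.

Lemma v_approx eps : 0 < eps -> exists K, forall j, a K j <= v j + eps.
Proof.
move=> e0.
have /choice [Kf hK] : forall j, exists k : nat, a k j <= v j + eps.
  move=> j; have [_ [k _ <-] hk] := inf_adherent e0 (has_inf_a j).
  by exists k; exact: ltW.
exists (\max_j Kf j) => j; apply: le_trans (hK j).
by apply: a_decr; exact: leq_bigmax.
Qed.

Lemma v_harm : is_harmonic g v.
Proof.
apply/funext => i; apply/le_anti/andP; split.
  apply: lb_le_inf; first by exists (a 0 i), 0%N.
  move=> _ [k _ <-]; case: k => [|k]; last first.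
    by apply: gmono => j; exact: v_le.
  apply: le_trans (hu i); apply: gmono => j; exact: (v_le 0).
apply/ler_addgt0Pr => e e0.
have [K hK] := v_approx e e0.
have h1 : vle (a K) (fun j => e + v j) by move=> j; rewrite addrC.
have := gmono _ _ h1 i; rewrite ghom => h2.
have := v_le K.+1 i; rewrite /= => h3.
lra.
Qed.

Lemma a_C k i : C i -> a k i = u i.
Proof.
move=> Ci; elim: k => //= k ih.
rewrite (super_C) //; exact: a_dec.
Qed.

Lemma v_C i : C i -> v i = u i.
Proof.
move=> Ci; apply/le_anti/andP; split; first by have := v_le 0 i.
by apply: lb_le_inf; [exists (a 0 i), 0%N | move=> _ [k _ <-]; rewrite a_C].
Qed.

Lemma main_sec :
  let C := critical_wrt g w in
  exists v : 'I_n -> R, forall x : 'I_n -> R,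
    [/\ ((forall i, (fun k : nat => iter k g u i) @ \oo --> x i) <-> x = v),
        ((is_harmonic g x /\ (forall i, C i -> x i = u i)) <-> x = v),
        (((forall i, C i -> x i = u i) /\
          (forall i, ~ C i -> g (imath C x u) i = x i)) <-> x = v) &
        ((is_superharmonic g x /\ (forall i, C i -> u i <= x i) /\
          (forall y, is_superharmonic g y -> (forall i, C i -> u i <= y i) ->
             vle x y)) <-> x = v)].
Proof.
move=> C0; rewrite /C0; exists v => x.
have vh := v_harm.
have vsup : is_superharmonic g v by rewrite /is_superharmonic vh => i.
have imv : forall y, (forall i, C i -> y i = u i) -> imath C y u = y.
  move=> y hy; apply/funext => i; rewrite /imath; case: asboolP => // /hy ->.
  done.
have uniq3 : forall y, (forall i, C i -> y i = u i) -> (forall i, ~ C i -> g y i = y i) -> y = v.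
  move=> y hC hN.
  have hCv : forall i, C i -> y i = v i by move=> i Ci; rewrite hC // v_C.
  have le1 := HC _ _ vh hCv hN.
  have ysup : is_superharmonic g y.
    move=> i; case: (pselect (C i)) => Ci; last by rewrite hN.
    by apply: le_trans (gmono _ _ le1 i) _; rewrite vh hCv.
  have le2 : vle v y by apply: (SC _ _ vh ysup) => i Ci; rewrite hCv.
  by apply/funext => i; apply/le_anti; rewrite le1 le2.
split.
- split => [hx|->]; last exact: a_cvg.
  apply/funext => i; exact: (norm_cvg_unique (hx i) (a_cvg i)).
- split => [[hx hC]|->]; last by split => // i /v_C.
  by apply: uniq3 => // i _; rewrite hx.
- split => [[hC hN]|->].
    by apply: uniq3 => // i nC; have := hN i nC; rewrite imv.
  split; first by move=> i /v_C.
  by move=> i _; rewrite imv ?vh // => j /v_C.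
- split => [[hs [hC hmin]]|->].
    have le1 : vle x v by apply: hmin => // i /v_C ->.
    have le2 : vle v x by apply: (SC _ _ vh hs) => i Ci; rewrite v_C // hC.
    by apply/funext => i; apply/le_anti; rewrite le1 le2.
  split => //; split; first by move=> i /v_C ->.
  by move=> y hy hC; apply: (SC _ _ vh hy) => i Ci; rewrite v_C // hC.
Qed.
End G.

Local Open Scope classical_set_scope.
Local Open Scope ring_scope.

Theorem theorem3p3 (R : realType) (n : nat) (g : ('I_n -> R) -> ('I_n -> R))
  (gconv : convex_map g) (gmono : order_preserving g)
  (ghom : add_homogeneous g)
  (w : 'I_n -> R) (hw : is_harmonic g w)
  (u : 'I_n -> R) (hu : is_superharmonic g u) :
  let C := critical_wrt g w in
  exists v : 'I_n -> R, forall x : 'I_n -> R,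
    [/\ (* (i) *)
        ((forall i, (fun k : nat => iter k g u i) @ \oo --> x i) <-> x = v),
        (* (ii) *)
        ((is_harmonic g x /\ (forall i, C i -> x i = u i)) <-> x = v),
        (* (iii) *)
        (((forall i, C i -> x i = u i) /\
          (forall i, ~ C i -> g (imath C x u) i = x i)) <-> x = v) &
        (* (iv) *)
        ((is_superharmonic g x /\ (forall i, C i -> u i <= x i) /\
          (forall y, is_superharmonic g y -> (forall i, C i -> u i <= y i) ->
             vle x y)) <-> x = v)].
Proof.
exact: (@main_sec R n g gconv gmono ghom w hw u hu).
Qed.
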